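(* Let $P$ be a three-dimensional zonotope which is not a prism, and let $E$ be an edge of $P$ with $\#B(E)=10$. Then there exists an edge $M$ of $P$ not parallel to $E$ with $\#B(M)\ge 8$.
   Context: A zonotope is a Minkowski sum of finitely many segments. For an edge $E$ of a three-dimensional zonotope $P$, the belt $B(E)$ is the set of facets of $P$ containing a translate of $E$ as an edge, and $\#B(E)$ is the number of facets in it. A prism (cylinder) is a set $Q+S$ with $Q$ a convex polygon and $S$ a segment not parallel to the plane of $Q$. *)

(* Defs.v *)
From HB Require Import structures.
From mathcomp Require Import all_boot all_order all_algebra.
From mathcomp Require Import reals.
Set Implicit Arguments. Unset Strict Implicit. Unset Printing Implicit Defensive.
Import Order.TTheory GRing.Theory Num.Theory.
Local Open Scope ring_scope.

Section Zono.
Variable R : realType.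
Local Notation V := 'rV[R]_3.

Definition dot (u x : V) : R := \sum_(i < 3) u ord0 i * x ord0 i.

Definition seteq (A B : V -> Prop) : Prop := forall x, A x <-> B x.

Definition segment (a b : V) : V -> Prop :=
  fun x => exists t : R, 0 <= t <= 1 /\ x = a + t *: (b - a).

Definition minkowski (A B : V -> Prop) : V -> Prop :=
  fun x => exists y z, A y /\ B z /\ x = y + z.

Definition conv (n : nat) (p : 'I_n -> V) : V -> Prop :=
  fun x => exists l : 'I_n -> R, (forall i, 0 <= l i) /\
    \sum_(i < n) l i = 1 /\ x = \sum_(i < n) l i *: p i.

(* zonotope: Minkowski sum of finitely many segments [a_i, b_i] *)
Definition zonotope (P : V -> Prop) : Prop :=
  exists (n : nat) (a b : 'I_n -> V), forall x, P x <->
    exists t : 'I_n -> R, (forall i, 0 <= t i <= 1) /\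
      x = \sum_(i < n) (a i + t i *: (b i - a i)).

Definition full_dim (P : V -> Prop) : Prop :=
  forall (u : V) (c : R), u != 0 -> ~ (forall x, P x -> dot u x = c).

Definition not_in_line (F : V -> Prop) : Prop :=
  ~ exists a d : V, forall x, F x -> exists t : R, x = a + t *: d.

Definition face_of (S : V -> Prop) (u : V) : V -> Prop :=
  fun x => S x /\ forall y, S y -> dot u y <= dot u x.

Definition is_face (S F : V -> Prop) : Prop := exists u, seteq F (face_of S u).

Definition is_edge (S E : V -> Prop) : Prop :=
  is_face S E /\ exists a b : V, a != b /\ seteq E (segment a b).

(* facet of a 3-dimensional polytope: a proper face not contained in a line *)
Definition is_facet (P F : V -> Prop) : Prop :=
  (exists u : V, u != 0 /\ seteq F (face_of P u)) /\ not_in_line F.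

Definition translate (E : V -> Prop) (t : V) : V -> Prop := fun x => E (x - t).

Definition in_belt (P E F : V -> Prop) : Prop :=
  is_facet P F /\ exists t : V, is_edge F (translate E t).

Definition card_eq (A : (V -> Prop) -> Prop) (n : nat) : Prop :=
  exists f : 'I_n -> (V -> Prop),
    (forall i, A (f i)) /\ (forall i j, seteq (f i) (f j) -> i = j) /\
    (forall F, A F -> exists i, seteq (f i) F).

Definition card_ge (A : (V -> Prop) -> Prop) (n : nat) : Prop :=
  exists f : 'I_n -> (V -> Prop),
    (forall i, A (f i)) /\ (forall i j, seteq (f i) (f j) -> i = j).

Definition parallel (E M : V -> Prop) : Prop :=
  exists a b c d : V, seteq E (segment a b) /\ seteq M (segment c d) /\
    exists k : R, d - c = k *: (b - a).

Definition polygon (Q : V -> Prop) : Prop :=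
  (exists (n : nat) (p : 'I_n -> V), seteq Q (conv p)) /\
  (exists (u : V) (c : R), u != 0 /\ forall x, Q x -> dot u x = c) /\
  not_in_line Q.

Definition prism (P : V -> Prop) : Prop :=
  exists (Q : V -> Prop) (a b : V), polygon Q /\
    seteq P (minkowski Q (segment a b)) /\
    forall (u : V) (c : R), u != 0 -> (forall x, Q x -> dot u x = c) ->
      dot u (b - a) != 0.

End Zono.

(* Main.v *)
Require Import Defs.
From mathcomp Require Import all_boot all_order all_algebra.
From mathcomp Require Import reals.
From mathcomp Require Import ring lra zify.
Set Implicit Arguments. Unset Strict Implicit. Unset Printing Implicit Defensive.
Import Order.TTheory GRing.Theory Num.Theory.

Section Work.
Local Open Scope ring_scope.
Variable R : realType.
Local Notation V := 'rV[R]_3.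
Implicit Types (u v w x y z d : V).

Definition cmp (j : 'I_3) (v : V) : R := v ord0 j.
Lemma cmpD j (u v : V) : cmp j (u + v) = cmp j u + cmp j v. Proof. by rewrite /cmp mxE. Qed.
Lemma cmpN j (u : V) : cmp j (- u) = - cmp j u. Proof. by rewrite /cmp mxE. Qed.
Lemma cmpB j (u v : V) : cmp j (u - v) = cmp j u - cmp j v. Proof. by rewrite cmpD cmpN. Qed.
Lemma cmpZ j a (u : V) : cmp j (a *: u) = a * cmp j u. Proof. by rewrite /cmp mxE. Qed.
Lemma cmp0 j : cmp j (0 : V) = 0. Proof. by rewrite /cmp mxE. Qed.
Lemma cmp_sum j (I : finType) (P : pred I) (F : I -> V) :
  cmp j (\sum_(i | P i) F i) = \sum_(i | P i) cmp j (F i).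
Proof. by rewrite /cmp summxE. Qed.

Lemma vecE (u v : V) : u = v <-> [/\ cmp 0 u = cmp 0 v, cmp 1 u = cmp 1 v & cmp 2 u = cmp 2 v].
Proof.
split; first by move->.
case=> h0 h1 h2; apply/rowP => i.
have: [|| i == 0, i == 1 | i == 2] by case: i => [[|[|[|]]]].
by case/or3P => /eqP ->.
Qed.

Lemma sum3 (F : 'I_3 -> R) : \sum_(i < 3) F i = F 0 + F 1 + F 2.
Proof.
rewrite !big_ord_recr big_ord0 /= add0r.
have e0 : widen_ord (leqnSn 2) (widen_ord (leqnSn 1) ord_max) = 0 :> 'I_3 by apply/val_inj.
have e1 : widen_ord (leqnSn 2) ord_max = 1 :> 'I_3 by apply/val_inj.
have e2 : ord_max = 2 :> 'I_3 by apply/val_inj.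
by rewrite e0 e1 e2.
Qed.

Lemma dotE (u x : V) : dot u x = cmp 0 u * cmp 0 x + cmp 1 u * cmp 1 x + cmp 2 u * cmp 2 x.
Proof. by rewrite /dot sum3. Qed.

Definition crossv (u v : V) : V := \row_(j < 3)
  (if j == 0 then cmp 1 u * cmp 2 v - cmp 2 u * cmp 1 v
   else if j == 1 then cmp 2 u * cmp 0 v - cmp 0 u * cmp 2 v
   else cmp 0 u * cmp 1 v - cmp 1 u * cmp 0 v).

Lemma crossE0 u v : cmp 0 (crossv u v) = cmp 1 u * cmp 2 v - cmp 2 u * cmp 1 v.
Proof. by rewrite {1}/cmp mxE. Qed.
Lemma crossE1 u v : cmp 1 (crossv u v) = cmp 2 u * cmp 0 v - cmp 0 u * cmp 2 v.
Proof. by rewrite {1}/cmp mxE. Qed.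
Lemma crossE2 u v : cmp 2 (crossv u v) = cmp 0 u * cmp 1 v - cmp 1 u * cmp 0 v.
Proof. by rewrite {1}/cmp mxE. Qed.

Definition det3 (x y z : V) : R := dot x (crossv y z).

Ltac vsimp1 := rewrite ?/det3 ?dotE ?crossE0 ?crossE1 ?crossE2 ?cmpD ?cmpB ?cmpN ?cmpZ ?cmp0.
Ltac vsimp := do 3 vsimp1.
Ltac vring := apply/vecE; vsimp; split; ring.

Lemma dotD u x y : dot u (x + y) = dot u x + dot u y. Proof. vsimp; ring. Qed.
Lemma dotZ u a x : dot u (a *: x) = a * dot u x. Proof. vsimp; ring. Qed.
Lemma dotN u x : dot u (- x) = - dot u x. Proof. vsimp; ring. Qed.
Lemma dotB u x y : dot u (x - y) = dot u x - dot u y. Proof. vsimp; ring. Qed.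
Lemma dot0 u : dot u 0 = 0. Proof. vsimp; ring. Qed.
Lemma dotC u x : dot u x = dot x u. Proof. vsimp; ring. Qed.
Lemma dotZl u a x : dot (a *: u) x = a * dot u x. Proof. vsimp; ring. Qed.
Lemma dotNl u x : dot (- u) x = - dot u x. Proof. vsimp; ring. Qed.
Lemma dot_sum u (I : finType) (P : pred I) (F : I -> V) :
  dot u (\sum_(i | P i) F i) = \sum_(i | P i) dot u (F i).
Proof. by apply: (big_morph (dot u) (dotD u) (dot0 u)). Qed.


Lemma dot_self_eq0 d : dot d d = 0 -> d = 0.
Proof.
rewrite dotE => h.
have h0 := sqr_ge0 (cmp 0 d); have h1 := sqr_ge0 (cmp 1 d); have h2 := sqr_ge0 (cmp 2 d).
rewrite !expr2 in h0 h1 h2.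
have e0 : cmp 0 d * cmp 0 d = 0 by lra.
have e1 : cmp 1 d * cmp 1 d = 0 by lra.
have e2 : cmp 2 d * cmp 2 d = 0 by lra.
move/eqP: e0; move/eqP: e1; move/eqP: e2; rewrite !mulf_eq0 !orbb => /eqP e2 /eqP e1 /eqP e0.
by apply/vecE; rewrite !cmp0.
Qed.

Lemma dot_self_ge0 d : 0 <= dot d d.
Proof.
rewrite dotE.
have h0 := sqr_ge0 (cmp 0 d); have h1 := sqr_ge0 (cmp 1 d); have h2 := sqr_ge0 (cmp 2 d).
rewrite !expr2 in h0 h1 h2; lra.
Qed.

Lemma dot_self_gt0 d : d != 0 -> 0 < dot d d.
Proof.
move=> hd; rewrite lt_def dot_self_ge0 andbT; apply/eqP => /dot_self_eq0 h.
by rewrite h eqxx in hd.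
Qed.

Lemma cross_cross_r a b u : crossv (crossv a b) u = dot a u *: b - dot b u *: a.
Proof. vring. Qed.
Lemma cross_cross_l d x : crossv d (crossv x d) = dot d d *: x - dot x d *: d.
Proof. vring. Qed.
Lemma cross0r u : crossv u 0 = 0. Proof. vring. Qed.
Lemma cross0l u : crossv 0 u = 0. Proof. vring. Qed.
Lemma crossZZ a b u : crossv (a *: u) (b *: u) = 0. Proof. vring. Qed.
Lemma crossZl a u v : crossv (a *: u) v = a *: crossv u v. Proof. vring. Qed.
Lemma crossZr a u v : crossv u (a *: v) = a *: crossv u v. Proof. vring. Qed.
Lemma crossC u v : crossv u v = - crossv v u. Proof. vring. Qed.
Lemma crossBl u v w : crossv (u - v) w = crossv u w - crossv v w. Proof. vring. Qed.
Lemma crossBr u v w : crossv w (u - v) = crossv w u - crossv w v. Proof. vring. Qed.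
Lemma cross_cross_same a b c : crossv (crossv a b) (crossv a c) = det3 a b c *: a.
Proof. vring. Qed.
Lemma det_three_perp n x y z :
  det3 x y z *: n = dot n x *: crossv y z + dot n y *: crossv z x + dot n z *: crossv x y.
Proof. vring. Qed.
Lemma det3_cyc x y z : det3 x y z = det3 y z x. Proof. vsimp; ring. Qed.
Lemma det3_swap12 x y z : det3 x y z = - det3 y x z. Proof. vsimp; ring. Qed.
Lemma det3_swap23 x y z : det3 x y z = - det3 x z y. Proof. vsimp; ring. Qed.
Lemma det3_dot x y z : det3 x y z = dot (crossv x y) z. Proof. vsimp; ring. Qed.
Lemma det3_xxz x z : det3 x x z = 0. Proof. vsimp; ring. Qed.
Lemma dot_cross_l a b : dot (crossv a b) a = 0. Proof. vsimp; ring. Qed.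
Lemma dot_cross_r a b : dot (crossv a b) b = 0. Proof. vsimp; ring. Qed.
Lemma det3_cross0 x y z : crossv x y = 0 -> det3 x y z = 0.
Proof. by rewrite det3_dot => ->; vsimp; ring. Qed.

Lemma par_lam x d : d != 0 -> crossv x d = 0 -> x = (dot x d / dot d d) *: d.
Proof.
move=> hd hx; have hp := dot_self_gt0 hd.
have e : dot d d *: x = dot x d *: d.
  by apply/eqP; rewrite -subr_eq0 -cross_cross_l hx cross0r.
have hn : dot d d != 0 by rewrite gt_eqF.
apply: (scalerI hn); rewrite e scalerA; congr (_ *: _); by field.
Qed.

Lemma three_perp n x y z : n != 0 -> dot n x = 0 -> dot n y = 0 -> dot n z = 0 ->
  det3 x y z = 0.
Proof.
move=> hn hx hy hz; have := det_three_perp n x y z.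
rewrite hx hy hz !scale0r !addr0 => /eqP; rewrite scaler_eq0 (negbTE hn) orbF.
by move/eqP.
Qed.

Lemma F1 a b c e : crossv a b != 0 -> det3 a b c = 0 -> det3 a b e = 0 -> det3 a c e = 0.
Proof.
move=> hn hc he; apply: (three_perp hn).
- exact: dot_cross_l.
- by rewrite -det3_dot.
- by rewrite -det3_dot.
Qed.

Lemma perp2_par a b u : crossv a b != 0 -> dot u a = 0 -> dot u b = 0 ->
  u = (dot u (crossv a b) / dot (crossv a b) (crossv a b)) *: crossv a b.
Proof.
move=> hn ha hb; apply: par_lam => //.
by rewrite crossC cross_cross_r dotC ha dotC hb !scale0r subrr oppr0.
Qed.


Lemma det3_xyx x y : det3 x y x = 0. Proof. vsimp; ring. Qed.
Lemma det3_xyy x y : det3 x y y = 0. Proof. vsimp; ring. Qed.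
Lemma det3_0r x y : det3 x y 0 = 0. Proof. vsimp; ring. Qed.

Lemma L2 a0 a1 x y h : crossv a0 a1 != 0 -> crossv x y != 0 -> det3 a0 a1 x = 0 ->
  det3 a0 a1 y = 0 -> det3 h x y = 0 -> det3 a0 a1 h = 0.
Proof.
move=> hn hm hx hy hh.
have hnx : dot (crossv a0 a1) x = 0 by rewrite -det3_dot.
have hny : dot (crossv a0 a1) y = 0 by rewrite -det3_dot.
have e := perp2_par hm hnx hny.
have hmh : dot h (crossv x y) = 0 by exact: hh.
by rewrite det3_dot; move: e; set la := (_ / _) => e; rewrite e dotZl dotC hmh mulr0.
Qed.
End Work.
Ltac vsimp1 := rewrite ?/det3 ?dotE ?crossE0 ?crossE1 ?crossE2 ?cmpD ?cmpB ?cmpN ?cmpZ ?cmp0.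
Ltac vsimp := do 3 vsimp1.
Ltac vring := apply/vecE; vsimp; split; ring.


Definition triples : seq (nat * nat * nat) :=
  [:: (0,1,2); (0,1,3); (0,1,4); (0,2,3); (0,2,4); (0,3,4); (1,2,3); (1,2,4); (1,3,4); (2,3,4)]%N.
Definition sort3 (p q r : nat) : nat * nat * nat :=
  let lo := minn p (minn q r) in let hi := maxn p (maxn q r) in (lo, p + q + r - lo - hi, hi)%N.
Definition tid (p q r : nat) : nat :=
  match p, q, r with
  | 0, 1, 2 => 0
  | 0, 1, 3 => 1
  | 0, 1, 4 => 2
  | 0, 2, 1 => 0
  | 0, 2, 3 => 3
  | 0, 2, 4 => 4
  | 0, 3, 1 => 1
  | 0, 3, 2 => 3
  | 0, 3, 4 => 5
  | 0, 4, 1 => 2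
  | 0, 4, 2 => 4
  | 0, 4, 3 => 5
  | 1, 0, 2 => 0
  | 1, 0, 3 => 1
  | 1, 0, 4 => 2
  | 1, 2, 0 => 0
  | 1, 2, 3 => 6
  | 1, 2, 4 => 7
  | 1, 3, 0 => 1
  | 1, 3, 2 => 6
  | 1, 3, 4 => 8
  | 1, 4, 0 => 2
  | 1, 4, 2 => 7
  | 1, 4, 3 => 8
  | 2, 0, 1 => 0
  | 2, 0, 3 => 3
  | 2, 0, 4 => 4
  | 2, 1, 0 => 0
  | 2, 1, 3 => 6
  | 2, 1, 4 => 7
  | 2, 3, 0 => 3
  | 2, 3, 1 => 6
  | 2, 3, 4 => 9
  | 2, 4, 0 => 4
  | 2, 4, 1 => 7
  | 2, 4, 3 => 9
  | 3, 0, 1 => 1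
  | 3, 0, 2 => 3
  | 3, 0, 4 => 5
  | 3, 1, 0 => 1
  | 3, 1, 2 => 6
  | 3, 1, 4 => 8
  | 3, 2, 0 => 3
  | 3, 2, 1 => 6
  | 3, 2, 4 => 9
  | 3, 4, 0 => 5
  | 3, 4, 1 => 8
  | 3, 4, 2 => 9
  | 4, 0, 1 => 2
  | 4, 0, 2 => 4
  | 4, 0, 3 => 5
  | 4, 1, 0 => 2
  | 4, 1, 2 => 7
  | 4, 1, 3 => 8
  | 4, 2, 0 => 4
  | 4, 2, 1 => 7
  | 4, 2, 3 => 9
  | 4, 3, 0 => 5
  | 4, 3, 1 => 8
  | 4, 3, 2 => 9
  | _, _, _ => 10
  end%N.
Definition Zb (b : seq bool) (p q r : nat) : bool := nth false b (tid p q r).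
Fixpoint bseqs (n : nat) : seq (seq bool) :=
  if n is n'.+1 then [seq x :: s | x <- [:: true; false], s <- bseqs n'] else [:: [::]].
Definition I5 := iota 0 5.
Definition hypb (b : seq bool) : bool :=
  all (fun p => all (fun q => all (fun r => all (fun s =>
    uniq [:: p; q; r; s] ==> (Zb b p q r && Zb b p q s ==> Zb b p r s)) I5) I5) I5) I5.
Definition conclb (b : seq bool) : bool :=
  [&& Zb b 0 1 2, Zb b 0 1 3 & Zb b 0 1 4] ||
  has (fun i => has (fun x => has (fun y => has (fun w =>
    [&& uniq [:: i; x; y; w], ~~ Zb b i x y, ~~ Zb b i x w & ~~ Zb b i y w]) I5) I5) I5) I5.

Lemma check_all : all (fun b => hypb b ==> conclb b) (bseqs 10).
Proof. vm_compute. reflexivity. Qed.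

Lemma mem_bseqs (s : seq bool) : s \in bseqs (size s).
Proof.
elim: s => [|x s IH] //=.
case: x; rewrite /= mem_cat; apply/orP; [left|right; rewrite mem_cat; apply/orP; left];
  by apply/mapP; exists s.
Qed.

Lemma comb5 (Z : nat -> nat -> nat -> bool) :
  (forall p q r, Z p q r = Z q p r) -> (forall p q r, Z p q r = Z p r q) ->
  (forall p q r s, (p < 5)%N -> (q < 5)%N -> (r < 5)%N -> (s < 5)%N ->
     uniq [:: p; q; r; s] -> Z p q r -> Z p q s -> Z p r s) ->
  [&& Z 0 1 2, Z 0 1 3 & Z 0 1 4] \/
  exists i x y w, [/\ (i < 5)%N, (x < 5)%N, (y < 5)%N & (w < 5)%N] /\ uniq [:: i; x; y; w] /\
    [/\ ~~ Z i x y, ~~ Z i x w & ~~ Z i y w].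
Proof.
move=> h1 h2 hF.
pose b := [seq Z t.1.1 t.1.2 t.2 | t <- triples].
have bridge : forall p q r, (p < 5)%N -> (q < 5)%N -> (r < 5)%N -> uniq [:: p; q; r] ->
    Zb b p q r = Z p q r.
  move=> [|[|[|[|[|p]]]]] [|[|[|[|[|q]]]]] [|[|[|[|[|r]]]]] //= _ _ _ _; rewrite /Zb /=;
  first [done | by rewrite [LHS]h1 | by rewrite [LHS]h2 | by rewrite [LHS]h1 [LHS]h2
        | by rewrite [LHS]h2 [LHS]h1 | by rewrite [LHS]h1 [LHS]h2 [LHS]h1].
have hb : b \in bseqs 10 by have := mem_bseqs b; rewrite size_map.
have := allP check_all b hb => /implyP himp.
have hh : hypb b.
  apply/allP => p; rewrite mem_iota => /andP [_ hp].
  apply/allP => q; rewrite mem_iota => /andP [_ hq].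
  apply/allP => r; rewrite mem_iota => /andP [_ hr].
  apply/allP => s; rewrite mem_iota => /andP [_ hs].
  apply/implyP => hu; have hu' := hu.
  move: hu => /=; rewrite !inE !negb_or => /and4P [/and3P [pq pr ps] /andP [qr qs] rs _].
  rewrite !bridge //= ?inE ?negb_or ?pq ?pr ?ps ?qr ?qs ?rs //.
  by apply/implyP => /andP [e1 e2]; apply: (hF p q r s).
have := himp hh; case/orP.
  by rewrite /Zb /=; left.
move=> /hasP [i]; rewrite mem_iota => /andP [_ hi] /hasP [x]; rewrite mem_iota => /andP [_ hx].
move=> /hasP [y]; rewrite mem_iota => /andP [_ hy] /hasP [w]; rewrite mem_iota => /andP [_ hw].
case/and4P => hu n1 n2 n3; right; exists i, x, y, w; split => //; split => //.
have hu' := hu; move: hu => /=; rewrite !inE !negb_or => /and4P [/and3P [ix iy iw] /andP [xy xw] yw _].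
rewrite !bridge //= ?inE ?negb_or ?ix ?iy ?iw ?xy ?xw ?yw // in n1 n2 n3.
Qed.

Lemma pick5 (rel : 'I_10 -> 'I_10 -> bool) :
  (forall i, rel i i) -> (forall i j, rel i j -> rel j i) ->
  (forall i j k, rel i j -> rel j k -> rel i k) ->
  (forall i j k, rel i j -> rel j k -> rel i k -> i != j -> j != k -> i != k -> False) ->
  exists rs : 'I_5 -> 'I_10, forall p q, p != q -> ~~ rel (rs p) (rs q).
Proof.
move=> hrefl hsym htr h3.
pose Rep := [set i : 'I_10 | [forall j : 'I_10, (j < i)%N ==> ~~ rel i j]].
pose phi (i : 'I_10) : 'I_10 := [arg min_(j < i | rel i j) (j : nat)].
have hphi : forall i, rel i (phi i) /\ (forall j, rel i j -> (phi i <= j)%N).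
  move=> i; rewrite /phi; case: arg_minnP => //= j hj hmin; by split.
have hphiR : forall i, phi i \in Rep.
  move=> i; rewrite inE; apply/forallP => j; apply/implyP => hj; apply/negP => hr.
  have [h1 h2] := hphi i; have := h2 j (htr _ _ _ h1 hr); by rewrite leqNgt hj.
have hfib : forall r, (#|[pred i | phi i == r]| <= 2)%N.
  move=> r; rewrite leqNgt; apply/negP => /card_gt2P [x [y [z [[hx hy hz] [xy yz zx]]]]].
  move: hx hy hz; rewrite !inE => /eqP hx /eqP hy /eqP hz.
  have rx : rel x r by rewrite -hx; case: (hphi x).
  have ry : rel y r by rewrite -hy; case: (hphi y).
  have rz : rel z r by rewrite -hz; case: (hphi z).
  apply: (h3 x y z (htr _ _ _ rx (hsym _ _ ry)) (htr _ _ _ ry (hsym _ _ rz)) (htr _ _ _ rx (hsym _ _ rz))) => //.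
  by rewrite eq_sym.
have hcard : (10 <= 2 * #|Rep|)%N.
  have e : #|'I_10| = \sum_(r in Rep) #|[pred i | phi i == r]|.
    rewrite -sum1_card (partition_big phi (mem Rep)) /=; last by move=> i _; exact: hphiR.
    by apply: eq_bigr => r _; rewrite sum1_card.
  rewrite card_ord in e.
  apply: (@leq_trans (\sum_(r in Rep) #|[pred i | phi i == r]|)); first by rewrite -e.
  rewrite mulnC -sum_nat_const; apply: leq_sum => r _; exact: hfib.
have h5 : (5 <= #|Rep|)%N by lia.
exists (fun p => enum_val (widen_ord h5 p)) => p q hpq.
set x := enum_val _; set y := enum_val _.
have hx : x \in Rep := enum_valP _. have hy : y \in Rep := enum_valP _.
have hxy : x != y.
  apply: contra hpq => /eqP /enum_val_inj e; apply/eqP/val_inj; by move/(congr1 val): e.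
apply/negP => hr.
move: hx hy; rewrite !inE => /forallP hx /forallP hy.
case: (ltngtP x y) => hlt.
- by have := hy x; rewrite hlt /= (hsym _ _ hr).
- by have := hx y; rewrite hlt /= hr.
- by move: hxy; rewrite (val_inj hlt) eqxx.
Qed.

Section Z.
Local Open Scope ring_scope.
Variable R : realType.
Local Notation V := 'rV[R]_3.
Variable n : nat.
Implicit Types (u v w x y z d c a b : V) (S : pred 'I_n).
Variable g : 'I_n -> V.

Definition Zs c (S : pred 'I_n) : V -> Prop := fun x =>
  exists t : 'I_n -> R, (forall i, 0 <= t i <= 1) /\ (forall i, ~~ S i -> t i = 0) /\
    x = c + \sum_i t i *: g i.

Lemma Zs_ext c c' (S S' : pred 'I_n) : c = c' -> S =1 S' -> seteq (Zs c S) (Zs c' S').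
Proof.
move=> <- hS x; split; case=> t [h1 [h2 h3]]; exists t; split => //; split => // i; 
  [rewrite -hS | rewrite hS]; exact: h2.
Qed.

Lemma Zs_base c S : Zs c S c.
Proof.
exists (fun _ => 0); split; first by move=> i; rewrite lexx ler01.
split => //; by rewrite big1 ?addr0 // => i _; rewrite scale0r.
Qed.

Lemma sum_delta (i : 'I_n) (F : 'I_n -> V) : \sum_j (if j == i then 1 else 0) *: F j = F i.
Proof.
rewrite (bigD1 i) //= eqxx scale1r big1 ?addr0 // => j /negbTE ->; by rewrite scale0r.
Qed.

Lemma Zs_gen c S i : S i -> Zs c S (c + g i).
Proof.
move=> hi; exists (fun j => if j == i then 1 else 0); split.
  by move=> j; case: ifP => _; rewrite ?lexx ?ler01.
split; last by rewrite sum_delta.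
by move=> j hj; case: eqP => // e; rewrite e hi in hj.
Qed.

Lemma Zs_translate c S t : seteq (translate (Zs c S) t) (Zs (c + t) S).
Proof.
move=> x; rewrite /translate; split; case=> s [h1 [h2 h3]]; exists s; split => //; split => //.
  by rewrite -[x](subrK t) h3; rewrite addrAC.
by rewrite h3 addrAC addrK.
Qed.

Lemma face_of_ext (A B : V -> Prop) u : seteq A B -> seteq (face_of A u) (face_of B u).
Proof.
move=> hAB x; split; case=> hx hmax; split; try by apply/hAB.
- by move=> y /hAB; apply: hmax.
- by move=> y /hAB; apply: hmax.
Qed.

Lemma seteq_sym (A B : V -> Prop) : seteq A B -> seteq B A.
Proof. by move=> h x; split => /h. Qed.
Lemma seteq_trans (A B C : V -> Prop) : seteq A B -> seteq B C -> seteq A C.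
Proof. by move=> h1 h2 x; split => [/h1/h2|/h2/h1]. Qed.

Lemma Zs_dot c (t : 'I_n -> R) u : dot u (c + \sum_i t i *: g i) = dot u c + \sum_i t i * dot u (g i).
Proof. by rewrite dotD dot_sum; congr (_ + _); apply: eq_bigr => i _; rewrite dotZ. Qed.

Lemma sum_split (P : pred 'I_n) (t : 'I_n -> R) : (forall i, P i -> t i = 0) ->
  \sum_(i | P i) g i + \sum_i t i *: g i = \sum_i (if P i then 1 else t i) *: g i.
Proof.
move=> h; rewrite (big_mkcond P) -big_split /=; apply: eq_bigr => i _.
case: ifP => hi; last by rewrite add0r.
by rewrite (h i hi) scale0r addr0 scale1r.
Qed.

Lemma face_Zs c S u : seteq (face_of (Zs c S) u)
   (Zs (c + \sum_(i | S i && (0 < dot u (g i))) g i) [pred i | S i && (dot u (g i) == 0)]).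
Proof.
set p := fun i => dot u (g i).
move=> x; split.
- case=> [[t [h1 [h2 ->]]] hmax].
  pose t' := fun i => if S i && (0 < p i) then 1 else 0 : R.
  have hy : Zs c S (c + \sum_i t' i *: g i).
    exists t'; split; first by move=> i; rewrite /t'; case: ifP => _; rewrite ?lexx ?ler01.
    split => // i hi; by rewrite /t' (negbTE hi).
  have := hmax _ hy; rewrite !Zs_dot lerD2l => hle.
  have hnn : forall i, true -> 0 <= (t' i - t i) * p i.
    move=> i _; rewrite /t'; case hS: (S i) => /=; last first.
      by rewrite h2 ?hS // subrr mul0r.
    have := h1 i; case/andP => ha hb.
    case: ltgtP => hp /=.
    + by apply: mulr_ge0; [rewrite subr_ge0 | exact: ltW].
    + by rewrite sub0r mulNr oppr_ge0; apply: mulr_ge0_le0 => //; exact: ltW.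
    + by rewrite -hp mulr0.
  have hsum : \sum_i (t' i - t i) * p i = 0.
    apply/eqP; rewrite eq_le; apply/andP; split; last by apply: sumr_ge0.
    under eq_bigr do rewrite mulrBl.
    by rewrite sumrB subr_le0.
  have hz := psumr_eq0P hnn hsum.
  exists (fun i => if S i && (p i == 0) then t i else 0); split.
    by move=> i; case: ifP => _; rewrite ?h1 ?lexx ?ler01.
  split; first by move=> i /= /negbTE ->.
  rewrite -addrA sum_split; last by move=> i /andP [-> /gt_eqF ->].
  congr (_ + _); apply: eq_bigr => i _; congr (_ *: _).
  case hS: (S i) => /=; last by rewrite h2 ?hS.
  have := hz i isT; rewrite /t' hS /=.
  case: ltgtP => hp /=.
  + by move/eqP; rewrite mulf_eq0 (gt_eqF hp) orbF subr_eq0 => /eqP e; rewrite -e.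
  + by move/eqP; rewrite mulf_eq0 (lt_eqF hp) orbF sub0r oppr_eq0 => /eqP.
  + by [].
- case=> [t [h1 [h2 ->]]].
  rewrite -addrA sum_split; last first.
    by move=> i /andP [hS hp]; apply: h2; rewrite /= hS /= gt_eqF.
  pose T := fun i => if S i && (0 < dot u (g i)) then 1 else t i.
  rewrite -/(\sum_i T i *: g i).
  have hT1 : forall i, 0 <= T i <= 1 by move=> i; rewrite /T; case: ifP => _; rewrite ?lexx ?ler01 ?h1.
  split.
    exists T; split => //; split => // i hi; rewrite /T (negbTE hi) /=.
    by apply: h2; rewrite /= (negbTE hi).
  case=> y [s [hs1 [hs2 ->]]]; rewrite !Zs_dot lerD2l; apply: ler_sum => i _.
  rewrite /T; case hS: (S i) => /=; last first.
    have e1 : s i = 0 by apply: hs2; rewrite hS.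
    have e2 : t i = 0 by apply: h2; rewrite /= hS.
    by rewrite e1 e2 !mul0r.
  have := hs1 i; case/andP => ha hb.
  case: ltgtP => hp /=.
  + by apply: ler_wpM2r => //; exact: ltW.
  + have e2 : t i = 0 by apply: h2; rewrite /= hS lt_eqF.
    by rewrite e2 mul0r mulr_ge0_le0 // ltW.
  + by rewrite -hp !mulr0.
Qed.


Lemma sum_par S v (lam : 'I_n -> R) (t : 'I_n -> R) :
  (forall i, S i -> g i = lam i *: v) -> (forall i, ~~ S i -> t i = 0) ->
  \sum_i t i *: g i = (\sum_i t i * lam i) *: v.
Proof.
move=> hl ht; rewrite scaler_suml; apply: eq_bigr => i _.
case hS: (S i); first by rewrite hl // scalerA.
by rewrite ht ?hS // !mul0r !scale0r.
Qed.

Lemma div_mul_id (a s : R) : 0 <= a <= s -> a / s * s = a.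
Proof.
case/andP=> h1 h2; have [e|hs] := eqVneq s 0.
  by rewrite e in h2 *; apply/eqP; rewrite mulr0 eq_sym eq_le h1 h2.
by rewrite mulfVK.
Qed.

Lemma Zs_par_seg c S v (lam : 'I_n -> R) :
  (forall i, S i -> g i = lam i *: v) ->
  seteq (Zs c S)
   (segment (c + (\sum_i (if S i && (lam i < 0) then lam i else 0)) *: v)
            (c + (\sum_i (if S i && (0 < lam i) then lam i else 0)) *: v)).
Proof.
move=> hl.
set lm := fun i => if S i && (lam i < 0) then lam i else 0.
set lp := fun i => if S i && (0 < lam i) then lam i else 0.
have hBA : c + (\sum_i lp i) *: v - (c + (\sum_i lm i) *: v) = (\sum_i (lp i - lm i)) *: v.
  by rewrite sumrB scalerBl opprD addrACA subrr add0r.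
move=> x; split.
- case=> t [h1 [h2 ->]]; rewrite (sum_par hl h2).
  pose a := \sum_i (t i * lam i - lm i).
  have hterm : forall i, 0 <= t i * lam i - lm i <= lp i - lm i.
    move=> i; rewrite /lm /lp; case hS: (S i) => /=; last by rewrite h2 ?hS // mul0r subrr lexx.
    have /andP[ha hb] := h1 i.
    case: ltgtP => hp /=; apply/andP; split; nra.
  have ha : 0 <= a <= \sum_i (lp i - lm i).
    apply/andP; split; first by apply: sumr_ge0 => i _; case/andP: (hterm i).
    by apply: ler_sum => i _; case/andP: (hterm i).
  exists (a / \sum_i (lp i - lm i)); split.
    case/andP: ha => ha1 ha2; apply/andP; split; first by apply: divr_ge0 => //; apply: le_trans ha2.
    have [->|hs] := eqVneq (\sum_i (lp i - lm i)) 0; first by rewrite invr0 mulr0 ler01.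
    by rewrite ler_pdivrMr ?mul1r // lt_def hs (le_trans ha1 ha2).
  rewrite hBA scalerA (div_mul_id ha) -addrA -scalerDl; congr (_ + _ *: _).
  by rewrite /a sumrB addrC subrK.
- case=> s [/andP[hs1 hs2] ->]; rewrite hBA.
  pose t := fun i => if S i then (if 0 < lam i then s else if lam i < 0 then 1 - s else 0) else 0.
  exists t; split.
    move=> i; rewrite /t; case: ifP => _; last by rewrite lexx ler01.
    case: ifP => _; first by rewrite hs1 hs2.
    case: ifP => _; last by rewrite lexx ler01.
    by rewrite subr_ge0 hs2 gerBl hs1.
  split; first by move=> i /negbTE; rewrite /t => ->.
  have ht : forall i, ~~ S i -> t i = 0 by move=> i /negbTE; rewrite /t => ->.
  rewrite (sum_par hl ht) -addrA scalerA -scalerDl; congr (_ + _ *: _).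
  rewrite mulr_sumr -big_split /=; apply: eq_bigr => i _.
  rewrite /t /lm /lp; case: (S i) => /=; last by rewrite subrr mulr0 addr0 mul0r.
  case: ltgtP => hp /=; [ring | ring | by rewrite subrr mulr0 mul0r add0r].
Qed.

Lemma Zs_in_line c S v (lam : 'I_n -> R) :
  (forall i, S i -> g i = lam i *: v) -> forall x, Zs c S x -> exists tau, x = c + tau *: v.
Proof.
move=> hl x [t [h1 [h2 ->]]]; exists (\sum_i t i * lam i); by rewrite (sum_par hl h2).
Qed.

Lemma Zs_not_line c S d : d != 0 -> not_in_line (Zs c S) ->
  exists i, S i /\ crossv (g i) d != 0.
Proof.
move=> hd hnl.
case: (boolP [exists i, S i && (crossv (g i) d != 0)]).
  by case/existsP => i /andP [h1 h2]; exists i.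
rewrite negb_exists => /forallP hall; exfalso; apply: hnl.
exists c, d => x hx.
apply: (Zs_in_line (lam := fun i => dot (g i) d / dot d d)) hx => i hi.
apply: par_lam => //; have := hall i; rewrite hi /= negbK => /eqP //.
Qed.

Lemma seg_l a b : segment a b a.
Proof. by exists 0; rewrite lexx ler01 scale0r addr0. Qed.
Lemma seg_r a b : segment a b b.
Proof. by exists 1; rewrite lexx ler01 scale1r addrC subrK. Qed.
Lemma seg_diff a b x y : segment a b x -> segment a b y -> exists s, x - y = s *: (b - a).
Proof.
case=> s1 [_ ->] [s2 [_ ->]]; exists (s1 - s2).
vring.
Qed.

Lemma translate_ext (A B : V -> Prop) (t : V) : seteq A B -> seteq (translate A t) (translate B t).
Proof. by move=> h x; rewrite /translate; apply: h. Qed.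

Lemma translate_seg a b (t : V) : seteq (translate (segment a b) t) (segment (a + t) (b + t)).
Proof.
move=> x; rewrite /translate; split; case=> s [hs e]; exists s; split => //.
  by rewrite -[x](subrK t) e; vring.
  by rewrite e; vring.
Qed.

Lemma face_sub (A : V -> Prop) u x : face_of A u x -> A x.
Proof. by case. Qed.
Lemma face_dot_eq (A : V -> Prop) u x y : face_of A u x -> face_of A u y -> dot u x = dot u y.
Proof. by case=> hx mx [hy my]; apply/eqP; rewrite eq_le (mx _ hy) (my _ hx). Qed.
Lemma face_scale (A : V -> Prop) u (mu : R) : 0 < mu -> seteq (face_of A (mu *: u)) (face_of A u).
Proof.
move=> hm x; split; case=> hx mx; split => // y hy.
  by have := mx y hy; rewrite !dotZl ler_pM2l.
by rewrite !dotZl ler_pM2l // mx.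
Qed.

Lemma conv_expand (K : finType) (l : K -> R) c (be : K -> 'I_n -> R) :
  \sum_k l k *: (c + \sum_j be k j *: g j) =
  (\sum_k l k) *: c + \sum_j (\sum_k l k * be k j) *: g j.
Proof.
rewrite [(\sum_k l k) *: c]scaler_suml.
under eq_bigr do rewrite scalerDr scaler_sumr.
rewrite big_split /=; congr (_ + _).
rewrite exchange_big /=; apply: eq_bigr => j _.
by rewrite scaler_suml; apply: eq_bigr => k _; rewrite scalerA.
Qed.

Local Notation BT := {ffun 'I_n -> bool}.

Lemma Zs_conv c S : exists m (p : 'I_m -> V), seteq (Zs c S) (conv p).
Proof.
pose vert (f : BT) := c + \sum_j ((f j && S j)%:R : R) *: g j.
exists #|(predT : pred BT)|, (fun k => vert (enum_val k)) => x; split.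
- case=> t [h1 [h2 ->]].
  pose G := fun (i : 'I_n) (bb : bool) => if bb then t i else 1 - t i.
  pose l := fun f : BT => \prod_i G i (f i).
  exists (fun k => l (enum_val k)); split.
    move=> k; apply: prodr_ge0 => i _; rewrite /G; case: ifP => _; have := h1 i; case/andP => ha hb //.
    by rewrite subr_ge0.
  have hsum : \sum_(f in predT) l f = 1.
    rewrite /l -(bigA_distr_bigA (fun i bb => G i bb)) /=.
    apply: big1 => i _; rewrite /G (bigD1 true) //= (bigD1 false) //= big1 ?addr0.
      by rewrite addrC subrK.
    by case.
  have hj : forall j, \sum_(f in predT) l f * (f j)%:R = t j.
    move=> j; pose G' := fun (i : 'I_n) (bb : bool) => if i == j then G i bb * bb%:R else G i bb.
    have e : forall f : BT, l f * (f j)%:R = \prod_i G' i (f i).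
      move=> f; rewrite /l /G' (bigD1 j) //= [in RHS](bigD1 j) //= eqxx mulrAC; congr (_ * _).
      by apply: eq_bigr => i /negbTE ->.
    under eq_bigr do rewrite e.
    rewrite -(bigA_distr_bigA (fun i bb => G' i bb)) /= (bigD1 j) //=.
    rewrite [X in _ * X]big1; last first.
      move=> i /negbTE hi; rewrite (bigD1 true) //= (bigD1 false) //= big1 ?addr0 /G' hi /G.
        by rewrite addrC subrK.
      by case.
    rewrite mulr1 (bigD1 true) //= (bigD1 false) //= big1 ?addr0; last by case.
    by rewrite /G' eqxx /G /= mulr1 mulr0 addr0.
  split; first by rewrite -big_enum_val.
  rewrite -(big_enum_val (A := predT) (fun f => l f *: vert f)) conv_expand hsum scale1r.
  congr (_ + _); apply: eq_bigr => j _; congr (_ *: _).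
  case hS: (S j); last by rewrite h2 ?hS // big1 // => f _; rewrite andbF mulr0.
  rewrite -(hj j); apply: eq_bigr => f _; by rewrite andbT.
- case=> l [hl [hs ->]].
  rewrite (conv_expand (fun k => l k) c (fun k j => ((enum_val k j && S j)%:R : R))) hs scale1r.
  exists (fun j => \sum_k l k * (enum_val k j && S j)%:R); split.
    move=> j; apply/andP; split; first by apply: sumr_ge0 => k _; rewrite mulr_ge0.
    apply: (@le_trans _ _ (\sum_k l k)); last by rewrite hs.
    apply: ler_sum => k _; rewrite -[X in _ <= X]mulr1 ler_wpM2l //.
    by case: (_ && _); rewrite ?ler01 ?lexx.
  split => //; move=> j /negbTE hj; apply: big1 => k _; by rewrite hj andbF mulr0.
Qed.
End Z.

Section C.
Local Open Scope ring_scope.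
Variable R : realType.
Local Notation V := 'rV[R]_3.
Variable n : nat.
Implicit Types (u v w x y z d a b : V) (S : pred 'I_n).
Variable g : 'I_n -> V.
Variable c : V.
Variable P : V -> Prop.
Hypothesis hP : seteq P (Zs g c predT).
Hypothesis hfd : full_dim P.

Definition cf u := c + \sum_(i | 0 < dot u (g i)) g i.
Definition Sf u : pred 'I_n := [pred i | dot u (g i) == 0].

Lemma faceP u : seteq (face_of P u) (Zs g (cf u) (Sf u)).
Proof.
apply: seteq_trans; first exact: face_of_ext hP.
apply: seteq_trans; first exact: face_Zs.
by apply: Zs_ext.
Qed.

Lemma face_base u : face_of P u (cf u).
Proof. by apply/faceP; apply: Zs_base. Qed.

Lemma face_gen u i : dot u (g i) = 0 -> face_of P u (cf u + g i).
Proof. by move=> h; apply/faceP; apply: Zs_gen; rewrite /Sf inE h. Qed.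

Lemma face_perp u u' i : seteq (face_of P u) (face_of P u') -> dot u (g i) = 0 ->
  dot u' (g i) = 0.
Proof.
move=> e h; have h1 := face_base u; have h2 := face_gen h.
move/e: h1 => h1; move/e: h2 => h2.
by have := face_dot_eq h2 h1; rewrite dotD => e2; lra.
Qed.

Lemma face_opp u : u != 0 -> ~ seteq (face_of P u) (face_of P (- u)).
Proof.
move=> hu e; apply: (hfd hu (c := dot u (cf u))) => y hy.
have h1 := face_base u; have [_ m1] := h1; move/e: h1 => [_ m2].
apply/eqP; rewrite eq_le m1 //=.
by have := m2 y hy; rewrite !dotNl lerN2.
Qed.

Lemma line3 (F : V -> Prop) y k x : (exists a d, forall z, F z -> exists t : R, z = a + t *: d) ->
  F y -> F (y + k) -> F (y + x) -> crossv k x = 0.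
Proof.
case=> a [d hl] h1 h2 h3.
case: (hl _ h1) => t1 e1; case: (hl _ h2) => t2 e2; case: (hl _ h3) => t3 e3.
have ek : k = (t2 - t1) *: d by rewrite -[k](addKr y) e2 e1; vring.
have ex : x = (t3 - t1) *: d by rewrite -[x](addKr y) e3 e1; vring.
by rewrite ek ex crossZZ.
Qed.


Lemma dotDl a b x : dot (a + b) x = dot a x + dot b x. Proof. vsimp; ring. Qed.

Lemma choose_w (k x1 : V) : crossv k x1 != 0 ->
  exists w, dot w k = 0 /\ forall j, dot w (g j) = 0 -> crossv (g j) k = 0.
Proof.
move=> hp.
set p0 := crossv k x1. set q0 := crossv k p0.
have hpk : dot p0 k = 0 by rewrite /p0 dot_cross_l.
have hqk : dot q0 k = 0 by rewrite /q0 dot_cross_l.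
have hpq : crossv p0 q0 = dot p0 p0 *: k.
  by rewrite /q0 cross_cross_l dotC hpk scale0r subr0.
have hpp : dot p0 p0 != 0 by rewrite gt_eqF // dot_self_gt0.
have key : forall j, dot p0 (g j) = 0 -> dot q0 (g j) = 0 -> crossv (g j) k = 0.
  move=> j h1 h2; have := cross_cross_r p0 q0 (g j).
  rewrite h1 h2 !scale0r subr0 hpq crossZl => /eqP; rewrite scaler_eq0 (negbTE hpp) /=.
  by move/eqP => e; rewrite crossC e oppr0.
pose s := 1 + \sum_j `|dot p0 (g j)| / `|dot q0 (g j)|.
exists (p0 + s *: q0); split; first by rewrite dotDl dotZl hpk hqk mulr0 addr0.
move=> j; rewrite dotDl dotZl => h.
have [hb|hb] := eqVneq (dot q0 (g j)) 0.
  by apply: key => //; rewrite hb mulr0 addr0 in h.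
exfalso.
set al := dot p0 (g j) in h; set be := dot q0 (g j) in h hb.
have hbp : 0 < `|be| by rewrite normr_gt0.
have hr : `|al| / `|be| <= \sum_j `|dot p0 (g j)| / `|dot q0 (g j)|.
  rewrite (bigD1 j) //= lerDl; apply: sumr_ge0 => i _; by rewrite divr_ge0.
have hs : 1 + `|al| / `|be| <= s by rewrite lerD2l.
have hrb : `|al| / `|be| * `|be| = `|al| by rewrite mulfVK // gt_eqF.
have ha : `|al| = s * `|be|.
  have -> : al = - (s * be) by apply/eqP; rewrite -subr_eq0 opprK h.
  by rewrite normrN normrM ger0_norm // (le_trans _ hs) // addr_ge0 // divr_ge0.
set r := `|al| / `|be| in hr hs hrb.
have hal := normr_ge0 al.
nra.
Qed.


Lemma other4 (p : 'I_4) : exists q : 'I_4, p != q.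
Proof. exists (if p == 0 then 1 else 0); have [->|h] := eqVneq p 0; first by []. by rewrite (negbTE h). Qed.

Lemma partD (k : 'I_n) (xs : 'I_4 -> 'I_n) :
  (forall p q : 'I_4, p != q -> det3 (g k) (g (xs p)) (g (xs q)) != 0) ->
  exists M, is_edge P M /\ card_ge (in_belt P M) 8 /\ exists cM, M cM /\ M (cM + g k).
Proof.
move=> hdet.
have hcr : forall p q : 'I_4, p != q -> crossv (g k) (g (xs p)) != 0.
  move=> p q hpq; apply/eqP => e; have := hdet p q hpq; by rewrite det3_cross0 // eqxx.
have [w [hwk hw]] := choose_w (hcr 0 1 isT).
have hk0 : g k != 0 by apply/eqP => e; have := hcr 0 1 isT; rewrite e cross0l eqxx.
pose lam := fun j => dot (g j) (g k) / dot (g k) (g k).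
have hlam : forall j, Sf w j -> g j = lam j *: g k.
  move=> j /eqP hj; apply: par_lam => //; exact: hw.
have [A [B hAB]] : exists A B, seteq (Zs g (cf w) (Sf w)) (segment A B).
  by eexists; eexists; exact: (Zs_par_seg _ hlam).
pose M := face_of P w.
have hM : seteq M (segment A B) := seteq_trans (faceP w) hAB.
have hMc : M (cf w) := face_base w.
have hMk : M (cf w + g k) := face_gen hwk.
have hAneB : A != B.
  apply/eqP => eAB; move: (proj1 (hM _) hMc) (proj1 (hM _) hMk); rewrite -eAB.
  case=> t1 [_ e1] [t2 [_ e2]]; rewrite subrr scaler0 addr0 in e1 e2.
  rewrite -e1 scaler0 addr0 in e2.
  have e : g k = 0 by apply: (addrI (cf w)); rewrite e2 addr0.
  by rewrite e eqxx in hk0.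
exists M; split.
  split; first by exists w. by exists A, B.
split; last by exists (cf w).
pose sg (i : 'I_8) : R := if (i < 4)%N then 1 else -1.
pose id4 (i : 'I_8) : 'I_4 := inord (i %% 4).
pose uu i := sg i *: crossv (g k) (g (xs (id4 i))).
have hsg : forall i, sg i != 0 by move=> i; rewrite /sg; case: ifP => _; rewrite ?oppr_eq0 oner_eq0.
have hperpk : forall i, dot (uu i) (g k) = 0 by move=> i; rewrite dotZl dot_cross_l mulr0.
have hperpx : forall i, dot (uu i) (g (xs (id4 i))) = 0 by move=> i; rewrite dotZl dot_cross_r mulr0.
exists (fun i => face_of P (uu i)); split.
- move=> i; have [q hq] := other4 (id4 i).
  have hu0 : uu i != 0 by rewrite scaler_eq0 negb_or hsg (hcr _ _ hq).
  split.
  + split; first by exists (uu i).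
    move=> hl; move: (hcr _ _ hq); rewrite (line3 hl (face_base (uu i)) (face_gen (hperpk i)) (face_gen (hperpx i))) eqxx //.
  + pose cF := cf (uu i) + \sum_(j | Sf (uu i) j && (0 < dot w (g j))) g j.
    have hT : seteq (translate M (cF - cf w)) (face_of (face_of P (uu i)) w).
      apply: seteq_trans; first exact: translate_ext (faceP w).
      apply: seteq_trans; first exact: Zs_translate.
      apply: seteq_sym; apply: seteq_trans; first exact: face_of_ext (faceP (uu i)).
      apply: seteq_trans; first exact: face_Zs.
      apply: Zs_ext; first by rewrite [cf w + _]addrC subrK.
      move=> j /=; rewrite /Sf /=; case hj: (dot w (g j) == 0); last by rewrite andbF.
      by rewrite andbT (hlam j hj) dotZ hperpk mulr0 eqxx.
    exists (cF - cf w); split; first by exists w.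
    exists (A + (cF - cf w)), (B + (cF - cf w)); split.
      by apply: contra hAneB => /eqP /addIr ->.
    exact: seteq_trans (translate_ext _ hM) (translate_seg _ _ _).
- move=> i i' e.
  have h1 := face_perp e (hperpx i).
  rewrite /uu dotZl -det3_dot in h1.
  move/eqP: h1; rewrite mulf_eq0 (negbTE (hsg i')) /= => /eqP h1.
  have hid : id4 i' = id4 i.
    by apply/eqP; apply: contraT => hne; have := hdet _ _ hne; rewrite h1 eqxx.
  have hsgi : sg i = sg i'.
    apply/eqP; apply: contraT => hne; exfalso.
    have hu0 : uu i != 0.
      have [q hq] := other4 (id4 i); by rewrite scaler_eq0 negb_or hsg (hcr _ _ hq).
    apply: (face_opp hu0); apply: (seteq_trans e).
    have -> : uu i' = - uu i.
      rewrite /uu hid -scaleNr; congr (_ *: _); move: hne; rewrite /sg.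
      by case: ifP; case: ifP => _ _; rewrite ?eqxx // opprK.
    by move=> x.
  move: hid hsgi; rewrite /id4 /sg => hm hs.
  have hm' : (i' %% 4 = i %% 4)%N.
    by move/(congr1 val): hm => /=; rewrite !inordK ?ltn_mod.
  have hi := ltn_ord i; have hi' := ltn_ord i'.
  move: hs; case: (ltnP i 4) => h2; case: (ltnP i' 4) => h3 hs; try (exfalso; lra);
    apply/val_inj => /=; lia.
Qed.


Lemma find_h (a0 a1 d : V) (i0 j0 j1 : 'I_n) : g i0 = d -> g j0 = a0 -> g j1 = a1 ->
  crossv a0 a1 != 0 -> det3 a0 a1 d != 0 -> ~ prism P ->
  exists h : 'I_n, crossv (g h) d != 0 /\ det3 a0 a1 (g h) != 0.
Proof.
move=> hi0 hj0 hj1 ha hd hnp.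
have hd0 : d != 0 by apply/eqP => e; move: hd; rewrite e det3_0r eqxx.
case: (boolP [exists h, (crossv (g h) d != 0) && (det3 a0 a1 (g h) != 0)]).
  by case/existsP => h /andP [? ?]; exists h.
rewrite negb_exists => /forallP hall; exfalso; apply: hnp.
pose SW : pred 'I_n := [pred j | det3 a0 a1 (g j) == 0].
pose lam := fun j => dot (g j) d / dot d d.
have hlam : forall j, (predC SW) j -> g j = lam j *: d.
  move=> j /= hj; apply: par_lam => //; have := hall j.
  have hj' : (det3 a0 a1 (g j) == 0) = false by apply/negbTE.
  by rewrite negb_and !negbK hj' orbF => /eqP.
have [A [B hAB]] : exists A B, seteq (Zs g 0 (predC SW)) (segment A B).
  by eexists; eexists; exact: (Zs_par_seg _ hlam).
have hSW0 : SW j0 by rewrite /SW inE hj0 det3_xyx.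
have hSW1 : SW j1 by rewrite /SW inE hj1 det3_xyy.
have hQ0 : Zs g c SW c := Zs_base _ _ _.
have hQ1 : Zs g c SW (c + a0) by rewrite -hj0; apply: Zs_gen.
have hQ2 : Zs g c SW (c + a1) by rewrite -hj1; apply: Zs_gen.
exists (Zs g c SW), A, B; split; [|split].
- split; first exact: Zs_conv.
  split.
  + exists (crossv a0 a1), (dot (crossv a0 a1) c); split => // x [t [h1 [h2 ->]]].
    rewrite Zs_dot big1 ?addr0 // => j _; case hj: (SW j).
      by rewrite -det3_dot (eqP hj) mulr0.
    by rewrite h2 ?hj // mul0r.
  + move=> hl; move: ha; by rewrite (line3 hl hQ0 hQ1 hQ2) eqxx.
- move=> x; split.
  + move/hP => [t [h1 [_ ->]]].
    exists (c + \sum_j (if SW j then t j else 0) *: g j), (\sum_j (if SW j then 0 else t j) *: g j).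
    split.
      exists (fun j => if SW j then t j else 0); split; first by move=> j; case: ifP; rewrite ?h1 ?lexx ?ler01.
      by split => // j /negbTE ->.
    split.
      apply/hAB; exists (fun j => if SW j then 0 else t j); split; first by move=> j; case: ifP; rewrite ?h1 ?lexx ?ler01.
      split; last by rewrite add0r.
      by move=> j /=; rewrite negbK => ->.
    rewrite -addrA -big_split /=; congr (_ + _); apply: eq_bigr => j _.
    by case: ifP => _; rewrite scale0r ?addr0 ?add0r.
  + case=> y [z [[t1 [h11 [h12 ->]]] [/hAB [t2 [h21 [h22 ->]]] ->]]].
    apply/hP; exists (fun j => t1 j + t2 j); split.
      move=> j; case hj: (SW j).
        by rewrite (h22 j) ?addr0 ?h11 //= hj.
      by rewrite (h12 j) ?add0r ?h21 // hj.
    split => //; rewrite add0r -addrA -big_split /=; congr (_ + _); apply: eq_bigr => j _.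
    by rewrite scalerDl.
- move=> u c' hu hQ.
  have e0 := hQ _ hQ0; have e1 := hQ _ hQ1; have e2 := hQ _ hQ2.
  have hu0 : dot u a0 = 0 by move: e1; rewrite dotD e0 => e1; lra.
  have hu1 : dot u a1 = 0 by move: e2; rewrite dotD e0 => e2; lra.
  have hu' := perp2_par ha hu0 hu1.
  have z0 : segment A B 0 by apply/hAB; exact: Zs_base.
  have zd : segment A B (0 + g i0) by apply/hAB; apply: Zs_gen; apply/negP => /eqP h; move: hd; rewrite -hi0 h eqxx.
  have [s es] := seg_diff zd z0.
  rewrite add0r subr0 hi0 in es.
  apply/eqP => hz.
  have : dot u d = 0 by rewrite es dotZ hz mulr0.
  move: hu'; set mu := (_ / _) => hu'; rewrite hu' dotZl -det3_dot => /eqP; rewrite mulf_eq0 (negbTE hd) orbF => /eqP hmu.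
  by move: hu; rewrite hu' hmu scale0r eqxx.
Qed.

Lemma nil_ext (F G : V -> Prop) : seteq F G -> not_in_line F -> not_in_line G.
Proof. move=> e hF [a [d hl]]; apply: hF; exists a, d => x /e; exact: hl. Qed.

Lemma partE (E : V -> Prop) : is_edge P E -> card_eq (in_belt P E) 10 ->
  exists (i0 : 'I_n) (as5 : 'I_5 -> 'I_n), g i0 != 0 /\
    (forall p q : 'I_5, p != q -> det3 (g i0) (g (as5 p)) (g (as5 q)) != 0) /\
    (forall M cM kv, parallel E M -> M cM -> M (cM + kv) -> crossv kv (g i0) = 0).
Proof.
case=> [[uE hE] [a [b [hab hseg]]]] [f [hf [hinj hcov]]].
have hE' : seteq E (Zs g (cf uE) (Sf uE)) := seteq_trans hE (faceP uE).
have parE : forall x y, E x -> E y -> exists s, x - y = s *: (b - a).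
  by move=> x y /hseg hx /hseg hy; apply: seg_diff.
have [i0 [hi0S hi0]] : exists i0, Sf uE i0 /\ g i0 != 0.
  case: (boolP [exists i, Sf uE i && (g i != 0)]).
    by case/existsP => i /andP [? ?]; exists i.
  rewrite negb_exists => /forallP hall; exfalso.
  have hpt : forall x, E x -> x = cf uE.
    move=> x /hE' [t [_ [h2 ->]]]; rewrite big1 ?addr0 // => i _.
    case hS: (Sf uE i); last by rewrite h2 ?hS // scale0r.
    by have := hall i; rewrite hS /= negbK => /eqP ->; rewrite scaler0.
  move: hab; rewrite (hpt a (proj2 (hseg a) (seg_l a b))).
  by rewrite (hpt b (proj2 (hseg b) (seg_r a b))) eqxx.
have [s0 hs0] : exists s0, g i0 = s0 *: (b - a).
  have h1 : E (cf uE) by apply/hE'; apply: Zs_base.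
  have h2 : E (cf uE + g i0) by apply/hE'; apply: Zs_gen.
  have [s es] := parE _ _ h2 h1; exists s; by rewrite -es addrC addKr.
exists i0.
have hdata : forall i : 'I_10, exists uj : V * 'I_n, [/\ uj.1 != 0, seteq (f i) (face_of P uj.1),
   dot uj.1 (g i0) = 0, dot uj.1 (g uj.2) = 0 & crossv (g uj.2) (g i0) != 0].
  move=> i; have [[[u [hu0 hfu]] hnl] [t [[w hw] _]]] := hf i.
  have hA : face_of P u (a + t).
    apply/hfu; apply: (face_sub (u := w)); apply/hw.
    by rewrite /translate addrK; apply/hseg; exact: seg_l.
  have hB : face_of P u (b + t).
    apply/hfu; apply: (face_sub (u := w)); apply/hw.
    by rewrite /translate addrK; apply/hseg; exact: seg_r.
  have hu : dot u (g i0) = 0.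
    have := face_dot_eq hA hB; rewrite !dotD => e.
    rewrite hs0 dotZ dotB (_ : dot u b - dot u a = 0) ?mulr0 //; lra.
  have hnl' := nil_ext (seteq_trans hfu (faceP u)) hnl.
  have [j [hj hjc]] := Zs_not_line hi0 hnl'.
  by exists (u, j); split => //; apply/eqP.
have [UJ hUJ] := fin_all_exists hdata.
pose U i := (UJ i).1; pose J i := (UJ i).2.
have hU : forall i, [/\ U i != 0, seteq (f i) (face_of P (U i)), dot (U i) (g i0) = 0,
   dot (U i) (g (J i)) = 0 & crossv (g (J i)) (g i0) != 0] by move=> i; exact: hUJ i.
pose rel i i' := det3 (g i0) (g (J i)) (g (J i')) == 0.
have hneg : forall i i', i != i' -> rel i i' -> exists mu : R, mu < 0 /\ U i' = mu *: U i.
  move=> i i' hii' /eqP hr.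
  have [hu0 hfu hu1 hu2 hc] := hU i; have [hu0' hfu' hu1' hu2' hc'] := hU i'.
  have hn : crossv (g i0) (g (J i)) != 0 by rewrite crossC oppr_eq0.
  have hn' : crossv (g i0) (g (J i')) != 0 by rewrite crossC oppr_eq0.
  have e1 := perp2_par hn hu1 hu2; have e2 := perp2_par hn' hu1' hu2'.
  have hcr : crossv (U i') (U i) = 0.
    move: e1 e2; set al := (_ / _); set al' := (_ / _) => e1 e2.
    by rewrite e1 e2 crossZl crossZr cross_cross_same det3_swap23 hr oppr0 !scale0r !scaler0.
  have e3 := par_lam hu0 hcr.
  move: e3; set mu := (_ / _) => e3; exists mu; split => //.
  have hmu0 : mu != 0 by apply: contra hu0' => /eqP hm; rewrite e3 hm scale0r.
  rewrite lt_neqAle hmu0 /=; rewrite leNgt; apply/negP => hm.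
  have : seteq (f i) (f i').
    apply: (seteq_trans hfu); apply: seteq_sym; apply: (seteq_trans hfu').
    by rewrite e3; apply: face_scale.
  by move/hinj => e; rewrite e eqxx in hii'.
have [rs hrs] : exists rs : 'I_5 -> 'I_10, forall p q, p != q -> ~~ rel (rs p) (rs q).
  apply: pick5.
  - by move=> i; rewrite /rel det3_xyy.
  - by move=> i j; rewrite /rel det3_swap23 oppr_eq0.
  - move=> i j k; rewrite /rel => /eqP h1 /eqP h2; apply/eqP.
    have hn : crossv (g i0) (g (J j)) != 0 by rewrite crossC oppr_eq0; case: (hU j).
    apply: (F1 hn) => //; by rewrite det3_swap23 h1 oppr0.
  - move=> i j k hij hjk hik nij njk nik.
    have [m1 [hm1 e1]] := hneg _ _ nij hij.
    have [m2 [hm2 e2]] := hneg _ _ nik hik.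
    have [m3 [hm3 e3]] := hneg _ _ njk hjk.
    have : (m2 - m3 * m1) *: U i = 0 by rewrite scalerBl -e2 -scalerA -e1 -e3 subrr.
    move/eqP; rewrite scaler_eq0; case: (hU i) => /negbTE -> _ _ _ _; rewrite orbF subr_eq0 => /eqP em.
    have : 0 < m3 * m1 by nra.
    by rewrite -em ltNge (ltW hm2).
exists (fun p => J (rs p)); split => //; split.
  by move=> p q /hrs.
move=> M cM kv [a' [b' [c' [d' [hE2 [hM2 [ka hka]]]]]]] hM1 hM2'.
have [s1 es1] := seg_diff (proj1 (hM2 _) hM2') (proj1 (hM2 _) hM1).
rewrite addrC addKr hka scalerA in es1.
have [s2 es2] := parE _ _ (proj2 (hE2 _) (seg_r a' b')) (proj2 (hE2 _) (seg_l a' b')).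
by rewrite es1 es2 scalerA hs0 crossZZ.
Qed.
End C.

Section Main.
Local Open Scope ring_scope.
Variable R : realType.
Local Notation V := 'rV[R]_3.

Lemma det3_crossyz (x y z : V) : crossv y z = 0 -> det3 x y z = 0.
Proof. by move=> e; rewrite /det3 e dot0. Qed.

Lemma xs_build (k v0 v1 v2 v3 d : V) : det3 k v0 v1 != 0 -> det3 k v0 v2 != 0 -> det3 k v0 v3 != 0 ->
  det3 k v1 v2 != 0 -> det3 k v1 v3 != 0 -> det3 k v2 v3 != 0 ->
  forall p q : 'I_4, p != q -> det3 k (nth d [:: v0; v1; v2; v3] p) (nth d [:: v0; v1; v2; v3] q) != 0.
Proof.
move=> h01 h02 h03 h12 h13 h23 [p hp] [q hq] /= hpq.
have sw : forall a b, det3 k a b != 0 -> det3 k b a != 0 by move=> a b; rewrite det3_swap23 oppr_eq0.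
move: p q hp hq hpq => [|[|[|[|p]]]] [|[|[|[|q]]]] hp hq hpq; try (exfalso; lia); try (by case/negP: hpq).
- exact: h01.
- exact: h02.
- exact: h03.
- exact: sw _ _ h01.
- exact: h12.
- exact: h13.
- exact: sw _ _ h02.
- exact: sw _ _ h12.
- exact: h23.
- exact: sw _ _ h03.
- exact: sw _ _ h13.
- exact: sw _ _ h23.
Qed.

Lemma main_aux (P E : V -> Prop) : zonotope P -> full_dim P -> ~ prism P ->
  is_edge P E -> card_eq (in_belt P E) 10 ->
  exists M, is_edge P M /\ ~ parallel E M /\ card_ge (in_belt P M) 8.
Proof.
move=> [n [a [b hz]]] hfd hnp hE hcard.
pose g i := b i - a i; pose c := \sum_i a i.
have hP : seteq P (Zs g c predT).
  move=> x; rewrite hz; split; case=> t [h1 h2]; exists t.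
    by split => //; split => //; rewrite h2 big_split.
  by split => //; case: h2 => _ ->; rewrite big_split.
have [i0 [as5 [hi0 [hdet hpar]]]] := partE hP hE hcard.
pose av (p : nat) := g (as5 (inord p)).
have hinj : forall p q : nat, (p < 5)%N -> (q < 5)%N -> p != q -> (inord p : 'I_5) != inord q.
  move=> p q hp hq hpq; apply: contra hpq => /eqP /(congr1 val) /=; rewrite !inordK //.
  by move->.
have hD : forall p q : nat, (p < 5)%N -> (q < 5)%N -> p != q -> det3 (g i0) (av p) (av q) != 0.
  by move=> p q hp hq hpq; apply: hdet; apply: hinj.
have hC : forall p q : nat, (p < 5)%N -> (q < 5)%N -> p != q -> crossv (av p) (av q) != 0.
  move=> p q hp hq hpq; apply/eqP => e; have := hD p q hp hq hpq.
  by rewrite det3_crossyz // eqxx.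
pose Z p q r := det3 (av p) (av q) (av r) == 0.
have := @comb5 Z.
case.
- by move=> p q r; rewrite /Z det3_swap12 oppr_eq0.
- by move=> p q r; rewrite /Z det3_swap23 oppr_eq0.
- move=> p q r s hp hq hr hs; rewrite /= !inE !negb_or => /and4P [/and3P [pq pr ps] _ _ _].
  rewrite /Z => /eqP h1 /eqP h2; apply/eqP; apply: (F1 (hC p q hp hq pq)) => //.
- case/and3P => /eqP z2 /eqP z3 /eqP z4.
  have hd01 : det3 (av 0) (av 1) (g i0) != 0 by rewrite -det3_cyc; exact: (hD 0 1 isT isT isT).
  have [h [hh1 hh2]] := find_h hP (i0 := i0) (j0 := as5 (inord 0)) (j1 := as5 (inord 1))
     (erefl (g i0)) (erefl (av 0)) (erefl (av 1)) (hC 0 1 isT isT isT)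
     hd01 hnp.
  have hW : forall p : 'I_4, det3 (av 0) (av 1) (av p) = 0.
    case=> [[|[|[|[|p]]]] hp]; [exact: det3_xyx | exact: det3_xyy | exact: z2 | exact: z3 | exfalso; lia].
  have hx4 : forall p q : 'I_4, p != q -> det3 (g h) (g (as5 (inord p))) (g (as5 (inord q))) != 0.
    move=> p q hpq.
    apply/eqP => e; move: hh2; rewrite (L2 (hC 0 1 isT isT isT) _ (hW p) (hW q) e) ?eqxx //.
    apply: hC => //; first by apply: (ltn_trans (ltn_ord p)).
      by apply: (ltn_trans (ltn_ord q)).
  have [M [hM1 [hM2 [cM [hc1 hc2]]]]] := partD hP hfd hx4.
  exists M; split => //; split => // hpr.
  by move: hh1; rewrite (hpar _ _ _ hpr hc1 hc2) eqxx.
- move=> [i [x [y [w [[hi hx hy hw] [hu [n1 n2 n3]]]]]]].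
  move: hu; rewrite /= !inE !negb_or => /and4P [/and3P [ix iy iw] /andP [xy xw] yw _].
  have dx : det3 (av i) (g i0) (av x) != 0 by rewrite det3_swap12 oppr_eq0 hD.
  have dy : det3 (av i) (g i0) (av y) != 0 by rewrite det3_swap12 oppr_eq0 hD.
  have dw : det3 (av i) (g i0) (av w) != 0 by rewrite det3_swap12 oppr_eq0 hD.
  pose xs (p : 'I_4) := nth i0 [:: i0; as5 (inord x); as5 (inord y); as5 (inord w)] p.
  have hxs : forall p q : 'I_4, p != q -> det3 (g (as5 (inord i))) (g (xs p)) (g (xs q)) != 0.
    move=> p q hpq; rewrite /xs -!(nth_map i0 (g i0)) ?size_tuple //.
    rewrite [map _ _]/=; exact: (xs_build (g i0) dx dy dw n1 n2 n3 hpq).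
  have [M [hM1 [hM2 [cM [hc1 hc2]]]]] := partD hP hfd hxs.
  exists M; split => //; split => // hpr.
  have := hpar _ _ _ hpr hc1 hc2 => e.
  by move: dx; rewrite det3_dot /av e dotC dot0 eqxx.
Qed.

End Main.

Theorem lemma4p4 (R : realType) (P E : 'rV[R]_3 -> Prop) :
  zonotope P -> full_dim P -> ~ prism P ->
  is_edge P E -> card_eq (in_belt P E) 10 ->
  exists M : 'rV[R]_3 -> Prop,
    is_edge P M /\ ~ parallel E M /\ card_ge (in_belt P M) 8.
Proof. exact: main_aux. Qed.
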